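(* For all $\varepsilon>0$ and $\ell\in\mathbb{N}$ there is $\varepsilon_1>0$ such that for all sufficiently large $n$: if $G$ is an $n$-vertex graph and $v\in V(G)$ is contained in at least $\varepsilon n^{2\ell}$ cycles of length $2\ell+1$, then $G$ contains at least $\varepsilon_1 n^{4\ell}$ copies of $C^*_{2\ell+1}(2)$ in which $v$ plays the role of $a_0$.
   Context: $C^*_{2\ell+1}(2)$ is the graph on vertices $a_0,a_1,b_1,\dots,a_{2\ell},b_{2\ell}$ with edges $a_ia_{i+1},b_ib_{i+1},a_ib_{i+1},b_ia_{i+1}$ for $i\in[2\ell-1]$ together with $a_0a_1,a_0b_1,a_0a_{2\ell},a_0b_{2\ell}$ (the blow-up of the cycle $C_{2\ell+1}$ in which every vertex except $a_0$ is doubled). Copies are counted as injective maps of the vertices $a_1,b_1,\dots,a_{2\ell},b_{2\ell}$ into $V(G)$ (with $a_0\mapsto v$) preserving edges. *)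

(* Defs.v *)
From HB Require Import structures.
From mathcomp Require Import all_boot all_order all_algebra.
From mathcomp Require Import reals.
Set Implicit Arguments. Unset Strict Implicit. Unset Printing Implicit Defensive.

(* Number of closed walks v, f 0, ..., f (k-1), v of length k+1 visiting
   k+1 distinct vertices, i.e. cycles of length k+1 through v rooted at v
   together with a direction.  For k >= 2 each (k+1)-cycle through v is
   counted exactly twice, so the number of (k+1)-cycles containing v is
   (rooted_cycles G v k) / 2. *)
Definition rooted_cycles n (G : rel 'I_n) (v : 'I_n) (k : nat) : nat :=
  #|[set f : {ffun 'I_k -> 'I_n} | uniq (v :: codom f) && cycle G (v :: codom f)]|.

(* Copies of C^*_{2l+1}(2) with a_0 |-> v: injective maps f of the vertices
   a_1,b_1,...,a_{2l},b_{2l} (vertex a_{i+1} is (i,true), b_{i+1} is (i,false),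
   for i : 'I_(2l)) into V(G), avoiding v, and preserving edges. *)
Definition cstar_copies n (G : rel 'I_n) (v : 'I_n) (l : nat) : nat :=
  #|[set f : {ffun 'I_(2 * l) * bool -> 'I_n} |
      [&& injectiveb f, v \notin codom f,
          [forall i : 'I_(2 * l), forall j : 'I_(2 * l), forall x : bool,
             forall y : bool, (val j == (val i).+1) ==> G (f (i, x)) (f (j, y))]
        & [forall i : 'I_(2 * l), forall x : bool,
             ((val i == 0) || (val i == (2 * l).-1)) ==> G v (f (i, x))]]]|.

(* Main.v *)
Require Import Defs.
From HB Require Import structures.
From mathcomp Require Import all_boot all_order all_algebra.
From mathcomp Require Import reals.
From mathcomp Require Import zify ring lra.
Import Order.TTheory GRing.Theory Num.Theory.
Set Implicit Arguments. Unset Strict Implicit. Unset Printing Implicit Defensive.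

Lemma cs_nat (I : finType) (c : I -> nat) :
  ((\sum_i c i) ^ 2 <= #|I| * \sum_i (c i) ^ 2)%N.
Proof.
have E1 : ((\sum_i c i) ^ 2 = \sum_i \sum_j c i * c j)%N.
  by rewrite expnS expn1 big_distrl /=; apply: eq_bigr => i _; rewrite big_distrr.
have E2 : (\sum_i \sum_(j : I) (c i ^ 2 + c j ^ 2) = 2 * (#|I| * \sum_i c i ^ 2))%N.
  have -> : (\sum_i \sum_(j : I) (c i ^ 2 + c j ^ 2) =
             \sum_i (#|I| * c i ^ 2 + \sum_(j : I) c j ^ 2))%N.
    apply: eq_bigr => i _; rewrite big_split /= sum_nat_const; done.
  rewrite big_split /= sum_nat_const -big_distrr /=. have -> : #|(xpredT : pred I)| = #|I| by []. lia.
have L : (2 * (\sum_i c i) ^ 2 <= \sum_i \sum_(j : I) (c i ^ 2 + c j ^ 2))%N.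
  rewrite E1 big_distrr /=; apply: leq_sum => i _.
  rewrite big_distrr /=; apply: leq_sum => j _.
  exact: (nat_Cauchy (c i) (c j)).
by rewrite E2 leq_pmul2l in L.
Qed.

Lemma cs_set (X K : finType) (r : X -> K) (A : {set X}) :
  (#|A| ^ 2 <= #|K| * #|[set p : X * X | [&& p.1 \in A, p.2 \in A & r p.1 == r p.2]]|)%N.
Proof.
pose c := fun k => #|[set x in A | r x == k]|.
have EA : #|A| = (\sum_k c k)%N.
  rewrite -sum1_card (partition_big r xpredT) //=; apply: eq_bigr => k _.
  by rewrite /c -sum1_card; apply: eq_bigl => x; rewrite inE.
have EP : #|[set p : X * X | [&& p.1 \in A, p.2 \in A & r p.1 == r p.2]]| = (\sum_k c k ^ 2)%N.
  rewrite -sum1_card (partition_big (fun p : X * X => r p.1) xpredT) //=; apply: eq_bigr => k _.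
  rewrite -mulnn -cardsX -sum1_card; apply: eq_bigl => [[x y]]; rewrite !inE /=.
  by case: (x \in A); case: (y \in A); case: (eqVneq (r x) k) => [->|ne] //=;
     rewrite ?andbF // eq_sym; case: eqP.
by rewrite EA EP; apply: cs_nat.
Qed.

Definition Wk n (G : rel 'I_n) (v : 'I_n) k (f : {ffun 'I_k -> 'I_n}) :=
  cycle G (v :: codom f).

Lemma WkP n (G : rel 'I_n) (v : 'I_n) k (f : {ffun 'I_k -> 'I_n}) : symmetric G -> Wk G v f ->
  (forall i j : 'I_k, val j = (val i).+1 -> G (f i) (f j)) /\
  (forall i : 'I_k, (val i == 0%N) || (val i == k.-1) -> G v (f i)).
Proof.
move=> sG; rewrite /Wk /= codom_ffun => /(pathP v) H.
have sz : size (fgraph f) = k by rewrite size_tuple card_ord.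
have nthf : forall i : 'I_k, nth v (fgraph f) i = f i by move=> i; rewrite nth_fgraph_ord.
move: (tval (fgraph f)) sz nthf H => s sz nthf H.
split.
  move=> i j ij; have := H j; rewrite size_rcons sz ltnS ltnW ?ltn_ord // => /(_ isT).
  rewrite ij /= !nth_rcons sz ltn_ord -ij ltn_ord.
  by rewrite nthf nthf.
move=> i /orP [/eqP i0 | /eqP ik].
  have := H 0%N; rewrite size_rcons /= => /(_ isT).
  have k0 : (0 < k)%N by rewrite -i0 ltn_ord.
  by rewrite nth_rcons sz k0 -i0 nthf.
have := H k; rewrite size_rcons sz ltnSn => /(_ isT).
have k0 : (0 < k)%N by exact: leq_ltn_trans (leq0n _) (ltn_ord i).
have e : k = (val i).+1 by rewrite /= ik prednK.
rewrite [in nth _ (_ :: _) k]e /= !nth_rcons sz ltnn eqxx.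
by rewrite ltn_ord nthf sG.
Qed.

Lemma ev_lt (l : nat) (j : 'I_l) : (2 * j < 2 * l)%N.
Proof. have := ltn_ord j; lia. Qed.
Lemma od_lt (l : nat) (j : 'I_l) : ((2 * j).+1 < 2 * l)%N.
Proof. have := ltn_ord j; lia. Qed.
Definition ev l (j : 'I_l) : 'I_(2 * l) := Ordinal (ev_lt j).
Definition od l (j : 'I_l) : 'I_(2 * l) := Ordinal (od_lt j).
Definition ke l n (f : {ffun 'I_(2 * l) -> 'I_n}) : {ffun 'I_l -> 'I_n} :=
  [ffun j => f (ev j)].
Definition ko l n (f : {ffun 'I_(2 * l) -> 'I_n}) : {ffun 'I_l -> 'I_n} :=
  [ffun j => f (od j)].

Lemma half_facts (i : nat) : (odd i + i./2 + i./2 = i)%N.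
Proof. by rewrite -addnA addnn -[RHS]odd_double_half. Qed.

Lemma ke_agree l n (f g : {ffun 'I_(2 * l) -> 'I_n}) :
  ke f = ke g -> forall i : 'I_(2 * l), ~~ odd i -> f i = g i.
Proof.
move=> E i oi; have h := half_facts i; rewrite (negbTE oi) in h.
have jl : (i./2 < l)%N by have := ltn_ord i; lia.
have ei : ev (Ordinal jl) = i by apply: val_inj => /=; lia.
by move/ffunP: E => /(_ (Ordinal jl)); rewrite !ffunE ei.
Qed.

Lemma ko_agree l n (f g : {ffun 'I_(2 * l) -> 'I_n}) :
  ko f = ko g -> forall i : 'I_(2 * l), odd i -> f i = g i.
Proof.
move=> E i oi; have h := half_facts i; rewrite oi in h.
have jl : (i./2 < l)%N by have := ltn_ord i; lia.
have ei : od (Ordinal jl) = i by apply: val_inj => /=; lia.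
by move/ffunP: E => /(_ (Ordinal jl)); rewrite !ffunE ei.
Qed.

Lemma card_bigcup_le (I T : finType) (P : pred I) (A : I -> {set T}) :
  (#|\bigcup_(i | P i) A i| <= \sum_(i | P i) #|A i|)%N.
Proof.
elim/big_rec2: _ => [|i k S _ H]; first by rewrite cards0.
 apply: leq_trans (leq_card_setU _ _).1 _; by rewrite leq_add2l.
Qed.

Lemma upd_bound (D : finType) n (A : {set {ffun D -> 'I_n}}) (y : D) :
  {in A &, forall F F' : {ffun D -> 'I_n}, (forall z, z != y -> F z = F' z) -> F = F'} ->
  (#|A| * n <= n ^ #|D|)%N.
Proof.
move=> H.
pose phi := fun p : {ffun D -> 'I_n} * 'I_n => [ffun z => if z == y then p.2 else p.1 z].
have inj : {in setX A [set: 'I_n] &, injective phi}.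
  move=> [F t] [F' t']; rewrite !inE /= => /andP[FA _] /andP[FA' _] /ffunP E.
  have tt' : t = t' by have := E y; rewrite !ffunE eqxx.
  congr pair => //; apply: H => // z zy; have := E z; rewrite !ffunE (negbTE zy).
  done.
have := card_in_imset inj; rewrite cardsX cardsT card_ord => <-.
by apply: leq_trans (max_card _) _; rewrite card_ffun card_ord.
Qed.

Lemma bad_bound (D : finType) n (v : 'I_n) :
  (#|[set F : {ffun D -> 'I_n} | ~~ injectiveb F || (v \in codom F)]| * n
     <= (#|D| * #|D| + #|D|) * n ^ #|D|)%N.
Proof.
pose S := fun p : D * D => [set F : {ffun D -> 'I_n} | F p.1 == F p.2].
pose T := fun x : D => [set F : {ffun D -> 'I_n} | F x == v].
have sub : [set F : {ffun D -> 'I_n} | ~~ injectiveb F || (v \in codom F)] \subset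
    (\bigcup_(p | p.1 != p.2) S p) :|: \bigcup_x T x.
  apply/subsetP => F; rewrite !inE => /orP [ninj | vin].
  - apply/orP; left.
    case: (boolP [exists p : D * D, (p.1 != p.2) && (F p.1 == F p.2)]).
    + by move=> /existsP [p /andP [pn pe]]; apply/bigcupP; exists p => //; rewrite inE.
    + move=> ne; exfalso; move/negP: ninj; apply; apply/injectiveP => x y Fxy.
      apply/eqP; apply: contraNT ne => nxy; apply/existsP; exists (x, y).
      by rewrite /= nxy Fxy eqxx.
  - apply/orP; right; move/codomP: vin => [x vx].
    by apply/bigcupP; exists x => //; rewrite inE -vx.
have h := leq_trans (subset_leq_card sub) (leq_card_setU _ _).1.
apply: leq_trans (leq_mul h (leqnn n)) _.
rewrite mulnDl mulnDl; apply: leq_add.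
- apply: leq_trans (leq_mul (card_bigcup_le _ _) (leqnn n)) _; rewrite big_distrl /=.
  apply: (@leq_trans (\sum_(p : D * D | p.1 != p.2) n ^ #|D|)).
    apply: leq_sum => p pn; apply: (upd_bound (y := p.2)) => F F'.
    rewrite !inE => /eqP e /eqP e' HF; apply/ffunP => z.
    case: (eqVneq z p.2) => [->|zn]; last exact: HF.
    by rewrite -e -e'; apply: HF.
  rewrite sum_nat_const leq_mul2r -card_prod max_card orbT //.
- apply: leq_trans (leq_mul (card_bigcup_le _ _) (leqnn n)) _; rewrite big_distrl /=.
  apply: (@leq_trans (\sum_(x : D) n ^ #|D|)).
    apply: leq_sum => x _; apply: (upd_bound (y := x)) => F F'.
    rewrite !inE => /eqP e /eqP e' HF; apply/ffunP => z.
    case: (eqVneq z x) => [->|zn]; last exact: HF.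
    by rewrite e e'.
  by rewrite sum_nat_const.
Qed.

Definition homc n (G : rel 'I_n) (v : 'I_n) l (F : {ffun 'I_(2 * l) * bool -> 'I_n}) :=
  [forall i : 'I_(2 * l), forall j : 'I_(2 * l), forall x : bool,
       forall y : bool, (val j == (val i).+1) ==> G (F (i, x)) (F (j, y))]
  && [forall i : 'I_(2 * l), forall x : bool,
       ((val i == 0) || (val i == (2 * l).-1)) ==> G v (F (i, x))].

Definition Wset n (G : rel 'I_n) v l := [set f : {ffun 'I_(2 * l) -> 'I_n} | Wk G v f].
Definition P1s n (G : rel 'I_n) v l :=
  [set p : {ffun 'I_(2 * l) -> 'I_n} * {ffun 'I_(2 * l) -> 'I_n} |
     [&& p.1 \in Wset G v l, p.2 \in Wset G v l & ke p.1 == ke p.2]].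
Definition r2 l n (p : {ffun 'I_(2 * l) -> 'I_n} * {ffun 'I_(2 * l) -> 'I_n}) :=
  (ko p.1, ko p.2).
Definition P2s n (G : rel 'I_n) v l :=
  [set q | [&& q.1 \in P1s G v l, q.2 \in P1s G v l & r2 q.1 == r2 q.2]].

Lemma step1 n (G : rel 'I_n) v l :
  (#|Wset G v l| ^ 2 <= n ^ l * #|P1s G v l|)%N.
Proof. by have := cs_set (@ke l n) (Wset G v l); rewrite card_ffun !card_ord. Qed.

Lemma step2 n (G : rel 'I_n) v l :
  (#|P1s G v l| ^ 2 <= (n ^ l * n ^ l) * #|P2s G v l|)%N.
Proof. by have := cs_set (@r2 l n) (P1s G v l); rewrite card_prod card_ffun !card_ord. Qed.

Lemma P2P n (G : rel 'I_n) v l q : q \in P2s G v l ->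
  [/\ Wk G v q.1.1 /\ Wk G v q.1.2, Wk G v q.2.1, Wk G v q.2.2,
      (forall i, q.1.2 i = if odd i then q.2.2 i else q.1.1 i) &
      (forall i, q.2.1 i = if odd i then q.1.1 i else q.2.2 i)].
Proof.
case: q => [[a b2] [b3 b]]; rewrite !inE /=.
move=> /and3P [/and3P [Wa Wb2 /eqP e1] /and3P [Wb3 Wb /eqP e2] /eqP [e3 e4]].
split=> // i; case: (boolP (odd i)) => oi.
- by rewrite (ko_agree e4).
- by rewrite (ke_agree e1).
- by rewrite (ko_agree e3).
- by rewrite (ke_agree e2).
Qed.

Definition phi l n (q : ({ffun 'I_(2 * l) -> 'I_n} * {ffun 'I_(2 * l) -> 'I_n}) *
                     ({ffun 'I_(2 * l) -> 'I_n} * {ffun 'I_(2 * l) -> 'I_n})) :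
  {ffun 'I_(2 * l) * bool -> 'I_n} :=
  [ffun ix => if ix.2 then q.1.1 ix.1 else q.2.2 ix.1].

Lemma step3 n (G : rel 'I_n) v l : symmetric G ->
  (#|P2s G v l| <= #|[set F | @homc n G v l F]|)%N.
Proof.
move=> sG.
have inj : {in P2s G v l &, injective (@phi l n)}.
  move=> q q' /P2P [_ _ _ h2 h3] /P2P [_ _ _ h2' h3'] /ffunP E.
  have ea : q.1.1 = q'.1.1 by apply/ffunP => i; have := E (i, true); rewrite !ffunE.
  have eb : q.2.2 = q'.2.2 by apply/ffunP => i; have := E (i, false); rewrite !ffunE.
  clear E; move: q q' h2 h3 h2' h3' ea eb => [[a b2] [b3 b]] [[a' b2'] [b3' b']] /= h2 h3 h2' h3' ea eb.
  subst a' b'; congr (_, _); congr (_, _); apply/ffunP => i.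
  - by rewrite h2 h2'.
  - by rewrite h3 h3'.
rewrite -(card_in_imset inj); apply: subset_leq_card; apply/subsetP => F.
move=> /imsetP [q /P2P [[Wa Wb2] Wb3 Wb h2 h3] ->]; rewrite inE.
apply/andP; split.
- apply/forallP => i; apply/forallP => j; apply/forallP => x; apply/forallP => y.
  apply/implyP => /eqP ij; rewrite !ffunE /=.
  have W2 := (WkP sG Wb2).1 i j ij; have W3 := (WkP sG Wb3).1 i j ij.
  have W1 := (WkP sG Wa).1 i j ij; have W4 := (WkP sG Wb).1 i j ij.
  have oj : odd j = ~~ odd i by rewrite ij.
  rewrite !h2 !h3 oj in W2 W3.
  by case: (odd i) W2 W3 => /= W2 W3; case: x; case: y.
- apply/forallP => i; apply/forallP => x; apply/implyP => H; rewrite ffunE.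
  by case: x => /=; [exact: (WkP sG Wa).2 i H | exact: (WkP sG Wb).2 i H].
Qed.

Lemma step4 n (G : rel 'I_n) v l :
  (#|[set F | @homc n G v l F]| <= cstar_copies G v l +
     #|[set F : {ffun 'I_(2 * l) * bool -> 'I_n} | ~~ injectiveb F || (v \in codom F)]|)%N.
Proof.
apply: leq_trans (leq_card_setU _ _).1; apply: subset_leq_card; apply/subsetP => F.
rewrite !inE /homc => hF.
by case: (injectiveb F); case: (v \in codom F); rewrite /= ?hF.
Qed.

Lemma step0 n (G : rel 'I_n) v l : (rooted_cycles G v (2 * l) <= #|Wset G v l|)%N.
Proof.
apply: subset_leq_card; apply/subsetP => f; rewrite !inE => /andP [_ c]; exact: c.
Qed.

Lemma bad_bound4 l n (v : 'I_n) :
  (#|[set F : {ffun 'I_(2 * l) * bool -> 'I_n} | ~~ injectiveb F || (v \in codom F)]| * n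
     <= ((4 * l) * (4 * l) + 4 * l) * n ^ (4 * l))%N.
Proof.
have cardD : #|{: 'I_(2 * l) * bool}| = (4 * l)%N by rewrite card_prod card_ord card_bool; lia.
by have := @bad_bound ('I_(2 * l) * bool)%type n v; rewrite cardD.
Qed.

Unset Implicit Arguments. Set Strict Implicit.
Local Open Scope ring_scope.

Theorem claim5p3 (R : realType) (eps : R) (l : nat) :
  0 < eps ->
  exists eps1 : R, 0 < eps1 /\
  exists N : nat, forall n : nat, (N <= n)%N ->
  forall (G : rel 'I_n), irreflexive G -> symmetric G ->
  forall v : 'I_n,
    eps * n%:R ^+ (2 * l) <= (rooted_cycles G v (2 * l))%:R / 2 ->
    eps1 * n%:R ^+ (4 * l) <= (cstar_copies G v l)%:R.
Proof.
move=> e0.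
set C : R := ((4 * l) * (4 * l) + 4 * l)%N%:R.
have e4 : 0 < eps ^+ 4 by rewrite exprn_gt0.
exists (8 * eps ^+ 4); split; first by rewrite mulr_gt0.
have x0 : 0 <= C / (8 * eps ^+ 4) by rewrite divr_ge0 // ?ler0n // mulr_ge0 // ltW.
exists (Num.Def.trunc (C / (8 * eps ^+ 4))).+1 => n Nn G iG sG v hyp.
have xn : C / (8 * eps ^+ 4) < n%:R by rewrite -truncn_lt_nat.
have n0 : 0 < n%:R :> R by apply: le_lt_trans xn.
have Cn : C < 8 * eps ^+ 4 * n%:R.
  by rewrite mulrC -ltr_pdivrMr // mulr_gt0.
have := step0 G v l; have := step1 G v l; have := step2 G v l; have := step3 v l sG.
have := step4 G v l; have := bad_bound4 l v.
set W := #|Wset G v l|; set p1 := #|P1s G v l|; set p2 := #|P2s G v l|.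
set h := #|[set F | homc G v F]|; set B := #|[set F | _ || _]|.
set rc := rooted_cycles _ _ _ ; set cs := cstar_copies _ _ _.
move=> hB; have {}hB : B%:R * n%:R <= C * n%:R ^+ (4 * l).
  by rewrite /C -natrX -!natrM ler_nat.
rewrite -!(ler_nat R) !(natrD, natrM, natrX).
move=> h4 h3 h2 h1 h0.
set P : R := n%:R ^+ l.
have P0 : 0 < P by rewrite exprn_gt0.
have {}h2 : (p1%:R : R) ^+ 2 <= P * P * p2%:R by exact: h2.
have {}h1 : (W%:R : R) ^+ 2 <= P * p1%:R by exact: h1.
have E2 : n%:R ^+ (2 * l) = P ^+ 2 :> R by rewrite mulnC exprM.
have E4 : n%:R ^+ (4 * l) = P ^+ 4 :> R by rewrite mulnC exprM.
rewrite E2 in hyp; rewrite E4 in hB *.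
have w0 : 2 * eps * P ^+ 2 <= W%:R by lra.
have ha : (W%:R) ^+ 4 <= P ^+ 4 * p2%:R.
  have -> : (W%:R : R) ^+ 4 = (W%:R ^+ 2) ^+ 2 by rewrite -exprM.
  apply: le_trans (_ : (P * p1%:R) ^+ 2 <= _).
    by apply: lerXn2r => //; rewrite nnegrE ?exprn_ge0 ?mulr_ge0 // ltW.
  rewrite exprMn; apply: le_trans (_ : P ^+ 2 * (P * P * p2%:R) <= _).
    by rewrite ler_pM2l // exprn_gt0.
  by rewrite le_eqVlt; apply/orP; left; apply/eqP; ring.
have hb : (2 * eps * P ^+ 2) ^+ 4 <= (W%:R) ^+ 4.
  apply: lerXn2r => //; rewrite nnegrE ?exprn_ge0 ?mulr_ge0 // ltW //.
have hc : 16 * eps ^+ 4 * P ^+ 4 <= p2%:R.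
  have P4 : 0 < P ^+ 4 by rewrite exprn_gt0.
  rewrite -(ler_pM2l P4); apply: le_trans ha; apply: le_trans hb.
  by rewrite le_eqVlt; apply/orP; left; apply/eqP; ring.
have hd : B%:R <= 8 * eps ^+ 4 * P ^+ 4.
  rewrite -(ler_pM2r n0); apply: le_trans hB _.
  have : C * P ^+ 4 <= 8 * eps ^+ 4 * n%:R * P ^+ 4.
    by rewrite ler_pM2r ?exprn_gt0 // ltW.
  move=> H; apply: le_trans H _.
  by rewrite le_eqVlt; apply/orP; left; apply/eqP; ring.
lra.
Qed.
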